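(* Let $s\ge1$, $n=2s$, and let $A$ be the $n\times n$ matrix with $A_{ij}=1$ if $|i-j|\le s-1$ and $0$ otherwise. Let $D$ be the $s\times s$ matrix with $D_{ij}=1$ if $i+j\le s+1$ and $D_{ij}=2$ if $i+j>s+1$, and let $P$ be the $s\times s$ permutation matrix with $P_{ij}=1$ iff $i+j=s+1$. If $x$ is any eigenvector of $D$ with eigenvalue $\lambda$ and $y=\begin{bmatrix}x\\ Px\end{bmatrix}\in\mathbb R^{n}$, then $Ay=\lambda y$. *)

(* Defs.v *)
From mathcomp Require Import all_boot all_order all_algebra.
Set Implicit Arguments. Unset Strict Implicit. Unset Printing Implicit Defensive.
Import Order.TTheory GRing.Theory Num.Theory.
Local Open Scope ring_scope.

(* Indices are 0-based ('I_m); the paper's 1-based conditions are shifted: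
   |i-j| <= s-1 is unchanged; i+j <= s+1 (1-based) becomes i+j <= s-1 (0-based);
   i+j = s+1 (1-based) becomes i+j = s-1 (0-based). *)

Definition bandA (R : ringType) (s : nat) : 'M[R]_(s + s) :=
  \matrix_(i, j) (if (`|(i : nat)%:Z - (j : nat)%:Z|%N <= s.-1)%N then 1 else 0).

Definition matD (R : ringType) (s : nat) : 'M[R]_s :=
  \matrix_(i, j) (if ((i : nat) + j + 2 <= s + 1)%N then 1 else 2%:R).

Definition matP (R : ringType) (s : nat) : 'M[R]_s :=
  \matrix_(i, j) (if ((i : nat) + j + 2 == s + 1)%N then 1 else 0).

(* Main.v *)
Require Import Defs.
From mathcomp Require Import all_boot all_order all_algebra zify.
Import Order.TTheory GRing.Theory Num.Theory.
Local Open Scope ring_scope.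

Lemma Px_E (R : ringType) s (x : 'cV[R]_s) k : (matP R s *m x) k 0 = x (rev_ord k) 0.
Proof.
rewrite mxE (bigD1 (rev_ord k)) //= big1 ?addr0.
  rewrite mxE /=; case: ifP; first by rewrite mul1r.
  move/negP; case; apply/eqP; have := ltn_ord k; lia.
move=> m hm; rewrite mxE; case: ifP; last by rewrite mul0r.
move=> /eqP h; case/negP: hm; apply/eqP/val_inj => /=; have := ltn_ord k; lia.
Qed.

Lemma AyE (R : ringType) s (x : 'cV[R]_s) i :
  (bandA R s *m col_mx x (matP R s *m x)) i 0 =
  \sum_(j < s) (bandA R s i (lshift s j) + bandA R s i (rshift s (rev_ord j))) * x j 0.
Proof.
rewrite mxE big_split_ord /=.
rewrite [X in _ + X](reindex_inj rev_ord_inj) /= -big_split /=.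
apply: eq_bigr => j _; rewrite col_mxEu col_mxEd Px_E rev_ordK mulrDl; done.
Qed.

Lemma distE (a b : nat) : (`|a%:Z - b%:Z|%N = if (b <= a)%N then (a - b)%N else (b - a)%N).
Proof. case: leqP => h; lia. Qed.

Theorem lemma13 (R : realFieldType) (s : nat) (hs : (1 <= s)%N)
    (x : 'cV[R]_s) (lambda : R) (hx : x != 0)
    (hD : matD R s *m x = lambda *: x) :
  bandA R s *m col_mx x (matP R s *m x) = lambda *: col_mx x (matP R s *m x).
Proof.
apply/matrixP => i k; rewrite (ord1 k) {k} AyE mxE.
rewrite -(splitK i); case: (split i) => r /=.
- rewrite col_mxEu; have -> : lambda * x r 0 = (lambda *: x) r 0 by rewrite mxE.
  rewrite -hD mxE; apply: eq_bigr => j _; congr (_ * _).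
  rewrite !mxE /= !distE; have := ltn_ord r; have := ltn_ord j.
  repeat case: ifP; rewrite ?natr1 ?addr0 //; lia.
- rewrite col_mxEd Px_E; have -> : lambda * x (rev_ord r) 0 = (lambda *: x) (rev_ord r) 0 by rewrite mxE.
  rewrite -hD mxE; apply: eq_bigr => j _; congr (_ * _).
  rewrite !mxE /= !distE; have := ltn_ord r; have := ltn_ord j.
  repeat case: ifP; rewrite ?natr1 ?addr0 ?add0r //; lia.
Qed.
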